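(* Let $s_0\in(0,1)$, $\tau,\eta,\lambda>0$, and let $(I_j^0)_{j\in\mathbb{Z}}$ be a finitely supported sequence with $I_j^0\in[0,1)$ for all $j$ and $I_j^0>0$ for at least one $j$. Let $f(v):=s_0(1-e^{-\tau v})-\eta v$ and let $(\mathcal{I}_j^\infty)_{j\in\mathbb{Z}}$ be the unique positive, bounded solution of $$0=f(\mathcal{I}_j)+I_j^0+\lambda\left(\mathcal{I}_{j-1}-2\mathcal{I}_j+\mathcal{I}_{j+1}\right),\qquad j\in\mathbb{Z}.$$ Let $(\mathcal{I}_j(t))_{j\in\mathbb{Z}}$ be the solution of $$\mathcal{I}_j'(t)=f(\mathcal{I}_j(t))+I_j^0+\lambda\left(\mathcal{I}_{j-1}(t)-2\mathcal{I}_j(t)+\mathcal{I}_{j+1}(t)\right),\qquad j\in\mathbb{Z},\ t>0,$$ starting from some nonnegative, bounded, compactly (finitely) supported initial condition. Then $(\mathcal{I}_j(t))_{j\in\mathbb{Z}}$ converges to $(\mathcal{I}_j^\infty)_{j\in\mathbb{Z}}$ locally uniformly in $j$ as $t\to+\infty$.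
   Context: Existence and uniqueness of the positive bounded stationary solution $(\mathcal{I}_j^\infty)$ is part of the setting (it is a separate result of the paper). *)

(* Defs.v *)
From Stdlib Require Import Reals ZArith.
Open Scope R_scope.

Definition freact (s0 tau eta v : R) : R := s0 * (1 - exp (- tau * v)) - eta * v.

Definition dlap (u : Z -> R) (j : Z) : R :=
  u (j - 1)%Z - 2 * u j + u (j + 1)%Z.

Definition rhs (s0 tau eta lambda : R) (I0 u : Z -> R) (j : Z) : R :=
  freact s0 tau eta (u j) + I0 j + lambda * dlap u j.

Definition bounded_seq (u : Z -> R) : Prop :=
  exists M, forall j, Rabs (u j) <= M.

Definition finitely_supported (u : Z -> R) : Prop :=
  exists N : Z, forall j, (N < Z.abs j)%Z -> u j = 0.

Definition pos_bdd_stationary (s0 tau eta lambda : R) (I0 v : Z -> R) : Prop :=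
  (forall j, 0 < v j) /\ bounded_seq v /\
  (forall j, rhs s0 tau eta lambda I0 v j = 0).

Definition is_solution (s0 tau eta lambda : R) (I0 u0 : Z -> R)
    (I : R -> Z -> R) : Prop :=
  (forall j, I 0 j = u0 j) /\
  (forall j eps, 0 < eps -> exists delta, 0 < delta /\
       forall t, 0 <= t < delta -> Rabs (I t j - u0 j) < eps) /\
  (forall j t, 0 < t ->
       derivable_pt_lim (fun s => I s j) t (rhs s0 tau eta lambda I0 (I t) j)) /\
  (forall T, 0 <= T -> exists M, forall t j, 0 <= t <= T -> Rabs (I t j) <= M).

(* Main.v *)
Require Import Defs.
From Stdlib Require Import Reals ZArith.
From Stdlib Require Import Lra Lia.
From Stdlib Require Classical_Prop.
From Coquelicot Require Import Coquelicot.
Open Scope R_scope.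


Lemma mvt_open (f f' : R -> R) a b : a < b ->
  (forall c, a <= c <= b -> continuity_pt f c) ->
  (forall c, a < c < b -> derivable_pt_lim f c (f' c)) ->
  exists c, a < c < b /\ f b - f a = f' c * (b - a).
Proof.
  intros Hab Hc Hd.
  pose (pr1 := fun c (P : a < c < b) => exist (fun l => derivable_pt_abs f c l) (f' c) (Hd c P)).
  pose (pr2 := fun c (P : a < c < b) => derivable_pt_id c).
  destruct (MVT f id a b pr1 pr2 Hab Hc (fun c _ => derivable_continuous_pt _ _ (derivable_pt_id c)))
    as [c [P HP]].
  exists c; split; auto.
  rewrite derive_pt_id in HP. unfold id in HP. simpl in HP. lra.
Qed.

Lemma cont_pt_eps (f : R -> R) x : continuity_pt f x ->
  forall eps, 0 < eps -> exists d, 0 < d /\ forall y, Rabs (y - x) < d -> Rabs (f y - f x) < eps.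
Proof.
  intros Hc eps He. destruct (Hc eps He) as [d [Hd H]].
  exists d; split; auto. intros y Hy.
  destruct (Req_dec y x) as [->|Hne]. rewrite Rminus_diag, Rabs_R0; lra.
  apply (H y). split. split. exact I. auto. exact Hy.
Qed.

Lemma last_zero (phi phi' : R -> R) a t C : a <= t -> phi a <= 0 -> 0 <= C ->
  (forall s, a <= s <= t -> continuity_pt phi s) ->
  (forall s, a < s <= t -> derivable_pt_lim phi s (phi' s)) ->
  (forall s, a < s <= t -> 0 < phi s -> phi' s <= C) ->
  phi t <= C * (t - a).
Proof.
  intros Hat Ha HC Hc Hd Hb.
  set (A := fun s => a <= s <= t /\ phi s <= 0).
  assert (HbA : bound A) by (exists t; intros x [Hx _]; lra).
  assert (HeA : exists x, A x) by (exists a; split; [lra|auto]).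
  destruct (completeness A HbA HeA) as [ss [Hub Hlub]].
  assert (Has : a <= ss) by (apply Hub; split; [lra|auto]).
  assert (Hst : ss <= t) by (apply Hlub; intros x [Hx _]; lra).
  assert (Hps : phi ss <= 0).
  { destruct (Rle_dec (phi ss) 0) as [h|h]; auto. exfalso.
    assert (Hne : a < ss) by (destruct (Req_dec a ss) as [<-|]; lra).
    destruct (cont_pt_eps phi ss (Hc ss (conj Has Hst)) (phi ss)) as [d [Hd0 Hd1]]; [lra|].
    assert (Hm : is_upper_bound A (Rmax a (ss - d/2))).
    { intros x [Hx Hpx]. assert (x <= ss) by (apply Hub; split; auto).
      destruct (Rle_dec x (Rmax a (ss - d/2))) as [h'|h']; auto.
      exfalso. assert (Rabs (x - ss) < d).
      { apply Rabs_def1; [|]; generalize (Rmax_r a (ss - d/2)); lra. }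
      specialize (Hd1 x H0). apply Rabs_def2 in Hd1. lra. }
    specialize (Hlub _ Hm). unfold Rmax in Hlub; destruct (Rle_dec a (ss - d/2)); lra. }
  destruct (Req_dec ss t) as [<-|Hne].
  - nra.
  - assert (Hlt : ss < t) by lra.
    destruct (mvt_open phi phi' ss t Hlt) as [c [Hcc Heq]].
    + intros c Hc'. apply Hc. lra.
    + intros c Hc'. apply Hd. lra.
    + assert (Hpc : 0 < phi c).
      { destruct (Rlt_dec 0 (phi c)) as [h|h]; auto. exfalso.
        assert (c <= ss) by (apply Hub; split; [lra|lra]). lra. }
      assert (phi' c <= C) by (apply Hb; [lra|auto]).
      nra.
Qed.


Lemma cmp_core (W D : R -> Z -> R) K T :
  0 < K ->
  (forall j, W 0 j <= 0) ->
  (forall j s, continuity_pt (fun x => W x j) s) ->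
  (forall j s, 0 < s -> derivable_pt_lim (fun x => W x j) s (D s j)) ->
  (exists Rb, forall t j, 0 <= t <= T -> W t j <= Rb) ->
  (forall t j b, 0 < t <= T -> 0 <= b -> (forall k, W t k <= b) -> 0 < W t j -> D t j <= K * b) ->
  forall t j, 0 <= t <= T -> W t j <= 0.
Proof.
  intros HK H0 Hc Hd [Rb HRb] Hcp.
  set (h := / (2 * K)).
  assert (Hh : 0 < h) by (unfold h; apply Rinv_0_lt_compat; lra).
  assert (HKh : K * h = /2) by (unfold h; field; lra).
  assert (P : forall n, forall t j, 0 <= t <= T -> t <= INR n * h -> W t j <= 0).
  { induction n as [|n IH].
    - intros t j Ht Htn. simpl in Htn. replace t with 0 by lra. apply H0.
    - intros t j Ht Htn. set (a := INR n * h) in *.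
      rewrite S_INR in Htn.
      destruct (Rle_dec t a) as [Hta|Hta]; [now apply IH|].
      assert (Ha0 : 0 <= a) by (unfold a; apply Rmult_le_pos; [apply pos_INR|lra]).
      set (Tm := Rmin T (a + h)).
      set (E := fun x => x = 0 \/ exists s k, a <= s <= Tm /\ x = W s k).
      assert (HbE : bound E).
      { exists (Rmax Rb 0). intros x [->|[s [k [Hs ->]]]].
        - apply Rmax_r.
        - eapply Rle_trans; [|apply Rmax_l]. apply HRb.
          unfold Tm in Hs; generalize (Rmin_l T (a+h)); lra. }
      destruct (completeness E HbE (ex_intro _ 0 (or_introl eq_refl))) as [Sp [Hub Hlub]].
      assert (HS0 : 0 <= Sp) by (apply Hub; left; auto).
      assert (Hall : forall s k, a <= s <= Tm -> W s k <= Sp / 2).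
      { intros s k Hs.
        assert (HTm : Tm <= T /\ Tm <= a + h) by (unfold Tm; split; [apply Rmin_l|apply Rmin_r]).
        assert (W s k <= K * Sp * (s - a)).
        { apply (last_zero (fun x => W x k) (fun x => D x k) a s (K * Sp)).
          - lra.
          - apply IH; [lra|lra].
          - apply Rmult_le_pos; lra.
          - intros; apply Hc.
          - intros s' Hs'. apply Hd. lra.
          - intros s' Hs' Hp. apply Hcp; auto. lra.
            intros k'. apply Hub. right. exists s', k'. split; auto. lra. }
        assert (K * Sp * (s - a) <= K * Sp * h).
        { apply Rmult_le_compat_l. apply Rmult_le_pos; lra. lra. }
        replace (K * Sp * h) with (Sp * (K * h)) in H1 by ring. rewrite HKh in H1. lra. }
      assert (HS : Sp <= Sp / 2).
      { apply Hlub. intros x [Hx|[s [k [Hs ->]]]]. rewrite Hx; lra. apply Hall; auto. }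
      assert (t <= Tm) by (unfold Tm; apply Rmin_glb; [lra|unfold a; lra]).
      specialize (Hall t j ltac:(lra)). lra. }
  intros t j Ht.
  destruct (INR_unbounded (t / h)) as [n Hn].
  apply (P n); auto.
  apply Rlt_le. apply (Rmult_lt_compat_r h) in Hn; auto.
  unfold Rdiv in Hn. rewrite Rmult_assoc, Rinv_l in Hn; lra.
Qed.


Lemma eps_cont_pt (f : R -> R) x :
  (forall eps, 0 < eps -> exists d, 0 < d /\ forall y, Rabs (y - x) < d -> Rabs (f y - f x) < eps) ->
  continuity_pt f x.
Proof.
  intros H eps He. destruct (H eps He) as [d [Hd Hy]].
  exists d; split; auto. intros y [_ Hy']. apply Hy. exact Hy'.
Qed.

Lemma rmax_pos x : 0 <= x -> Rmax x 0 = x.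
Proof. intros; unfold Rmax; destruct (Rle_dec x 0); lra. Qed.
Lemma rmax_neg x : x <= 0 -> Rmax x 0 = 0.
Proof. intros; unfold Rmax; destruct (Rle_dec x 0); lra. Qed.

Lemma cont_rmax (g : R -> R) :
  (forall eps, 0 < eps -> exists delta, 0 < delta /\ forall t, 0 <= t < delta -> Rabs (g t - g 0) < eps) ->
  (forall s, 0 < s -> continuity_pt g s) ->
  forall s, continuity_pt (fun x => g (Rmax x 0)) s.
Proof.
  intros Hr Hc s. apply eps_cont_pt. intros eps He.
  destruct (Rtotal_order s 0) as [Hs|[Hs|Hs]].
  - exists (- s). split; [lra|]. intros y Hy. apply Rabs_def2 in Hy.
    rewrite !rmax_neg by lra. rewrite Rminus_diag, Rabs_R0; lra.
  - subst s. destruct (Hr eps He) as [d [Hd H]]. exists d; split; auto.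
    intros y Hy. rewrite (rmax_neg 0) by lra. apply H. rewrite Rminus_0_r in Hy.
    unfold Rmax; destruct (Rle_dec y 0); apply Rabs_def2 in Hy; lra.
  - destruct (cont_pt_eps g s (Hc s Hs) eps He) as [d [Hd H]].
    exists (Rmin d s). split. apply Rmin_glb_lt; lra.
    intros y Hy. apply Rabs_def2 in Hy. generalize (Rmin_l d s) (Rmin_r d s); intros.
    rewrite !rmax_pos by lra. apply H. apply Rabs_def1; lra.
Qed.

Lemma der_rmax (g : R -> R) s l : 0 < s -> derivable_pt_lim g s l ->
  derivable_pt_lim (fun x => g (Rmax x 0)) s l.
Proof.
  intros Hs H eps He. destruct (H eps He) as [d Hd].
  assert (Hm : 0 < Rmin d s) by (apply Rmin_glb_lt; [apply cond_pos|lra]).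
  exists (mkposreal _ Hm). intros h Hh Hlt. simpl in Hlt.
  generalize (Rmin_l d s) (Rmin_r d s); intros.
  apply Rabs_def2 in Hlt.
  rewrite !rmax_pos by lra. apply Hd; auto. apply Rabs_def1; lra.
Qed.

Lemma cmp (w D : R -> Z -> R) K T :
  0 < K ->
  (forall j, w 0 j <= 0) ->
  (forall j eps, 0 < eps -> exists delta, 0 < delta /\ forall t, 0 <= t < delta -> Rabs (w t j - w 0 j) < eps) ->
  (forall j s, 0 < s -> derivable_pt_lim (fun x => w x j) s (D s j)) ->
  (exists Rb, forall t j, 0 <= t <= T -> w t j <= Rb) ->
  (forall t j b, 0 < t <= T -> 0 <= b -> (forall k, w t k <= b) -> 0 < w t j -> D t j <= K * b) ->
  forall t j, 0 <= t <= T -> w t j <= 0.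
Proof.
  intros HK H0 Hr Hd [Rb HRb] Hcp t j Ht.
  rewrite <- (rmax_pos t) by lra.
  apply (cmp_core (fun t j => w (Rmax t 0) j) D K T HK); auto.
  - intros k. rewrite rmax_pos by lra. apply H0.
  - intros k s. apply (cont_rmax (fun x => w x k)). apply Hr.
    intros s' Hs'. apply derivable_continuous_pt. exists (D s' k). apply Hd; auto.
  - intros k s Hs. apply (der_rmax (fun x => w x k)); auto.
  - exists Rb. intros t' k Ht'. rewrite rmax_pos by lra. auto.
  - intros t' k b Ht' Hb Hall Hp. rewrite rmax_pos in Hp by lra. apply Hcp; auto.
    intros k'. specialize (Hall k'). rewrite rmax_pos in Hall by lra. auto.
Qed.


Lemma exp_le1 x : x <= 0 -> exp x <= 1.
Proof. intros. rewrite <- exp_0. destruct (Req_dec x 0) as [->|E]; [lra|]. left; apply exp_increasing; lra. Qed.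

Lemma exp_diff tau x y : 0 <= tau -> y <= x ->
  0 <= exp (- tau * y) - exp (- tau * x) <= exp (- tau * y) * (tau * (x - y)).
Proof.
  intros Ht Hxy.
  replace (- tau * x) with (- tau * y + - (tau * (x - y))) by ring.
  rewrite exp_plus.
  generalize (exp_pos (- tau * y)) (exp_ineq1_le (- (tau * (x - y)))); intros He Hi.
  assert (exp (- (tau * (x - y))) <= 1).
  { rewrite <- exp_0. destruct (Req_dec (tau * (x-y)) 0) as [E|E].
    rewrite E, Ropp_0; lra. left; apply exp_increasing. assert (0 <= tau * (x - y)) by (apply Rmult_le_pos; lra). lra. }
  split; nra.
Qed.

Lemma exp_lip tau a b : 0 <= tau -> 0 <= a -> 0 <= b ->
  Rabs (exp (- tau * a) - exp (- tau * b)) <= tau * Rabs (a - b).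
Proof.
  intros Ht Ha Hb.
  assert (Hle : forall x y, 0 <= y <= x -> exp (- tau * y) <= 1).
  { intros x y Hy. apply exp_le1. nra. }
  destruct (Rle_dec b a) as [H|H].
  - destruct (exp_diff tau a b Ht H) as [H1 H2].
    rewrite Rabs_minus_sym, Rabs_pos_eq by lra. rewrite (Rabs_pos_eq (a - b)) by lra.
    specialize (Hle a b ltac:(lra)). assert (0 <= tau * (a - b)) by (apply Rmult_le_pos; lra). nra.
  - destruct (exp_diff tau b a Ht ltac:(lra)) as [H1 H2].
    rewrite Rabs_pos_eq by lra. rewrite Rabs_minus_sym, (Rabs_pos_eq (b - a)) by lra.
    specialize (Hle b a ltac:(lra)). assert (0 <= tau * (b - a)) by (apply Rmult_le_pos; lra). nra.
Qed.

Lemma f_lip0 s0 tau eta x y : 0 <= s0 -> 0 <= tau -> 0 <= eta -> 0 <= x -> 0 <= y ->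
  Rabs (freact s0 tau eta x - freact s0 tau eta y) <= (s0 * tau + eta) * Rabs (x - y).
Proof.
  intros. unfold freact.
  replace (s0 * (1 - exp (- tau * x)) - eta * x - (s0 * (1 - exp (- tau * y)) - eta * y))
    with (s0 * (exp (- tau * y) - exp (- tau * x)) + (- eta) * (x - y)) by ring.
  eapply Rle_trans; [apply Rabs_triang|]. rewrite !Rabs_mult.
  rewrite (Rabs_pos_eq s0), Rabs_Ropp, (Rabs_pos_eq eta) by lra.
  generalize (exp_lip tau y x H0 H3 H2); intros.
  rewrite Rmult_plus_distr_r.
  apply Rplus_le_compat_r. rewrite Rmult_assoc. apply Rmult_le_compat_l; auto.
  rewrite (Rabs_minus_sym x y); auto.
Qed.

Lemma f_onesided s0 tau eta Rb x y : 0 <= s0 -> 0 <= tau -> 0 <= eta -> y <= x -> - Rb <= y ->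
  freact s0 tau eta x - freact s0 tau eta y <= s0 * tau * exp (tau * Rb) * (x - y).
Proof.
  intros. unfold freact.
  destruct (exp_diff tau x y H0 H2) as [H4 H5].
  assert (exp (- tau * y) <= exp (tau * Rb)).
  { destruct (Req_dec (- tau * y) (tau * Rb)) as [E|E]. rewrite E; lra. left; apply exp_increasing. nra. }
  assert (0 <= tau * (x - y)) by (apply Rmult_le_pos; lra).
  assert (exp (- tau * y) * (tau * (x - y)) <= exp (tau * Rb) * (tau * (x - y))) by (apply Rmult_le_compat_r; auto).
  assert (0 <= eta * (x - y)) by (apply Rmult_le_pos; lra).
  assert (s0 * (exp (- tau * y) - exp (- tau * x)) <= s0 * (exp (tau * Rb) * (tau * (x - y)))).
  { apply Rmult_le_compat_l; lra. }
  nra.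
Qed.

Lemma f_bound s0 tau eta M x : 0 <= s0 -> 0 <= tau -> 0 <= eta -> 0 <= x <= M ->
  Rabs (freact s0 tau eta x) <= s0 + eta * M.
Proof.
  intros. unfold freact.
  assert (0 < exp (- tau * x)) by apply exp_pos.
  assert (exp (- tau * x) <= 1) by (apply exp_le1; nra).
  apply Rabs_le. split; nra.
Qed.

Lemma f_upper s0 tau eta x : 0 <= s0 -> freact s0 tau eta x <= s0 - eta * x.
Proof. intros. unfold freact. generalize (exp_pos (- tau * x)). nra. Qed.

Lemma f_zero s0 tau eta : freact s0 tau eta 0 = 0.
Proof. unfold freact. rewrite Rmult_0_r, exp_0. ring. Qed.


Lemma Rabs_le_inv a b : Rabs a <= b -> - b <= a <= b.
Proof. intros H. generalize (Rle_abs a) (Rle_abs (- a)). rewrite Rabs_Ropp. lra. Qed.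

Lemma loc_pos t : 0 < t -> locally t (fun s => 0 < s).
Proof.
  intros Ht. exists (mkposreal t Ht). intros y Hy. unfold ball in Hy. simpl in Hy.
  unfold AbsRing_ball, abs, minus, plus, opp in Hy. simpl in Hy.
  apply Rabs_def2 in Hy. lra.
Qed.

Lemma lip_cont (g : R -> R) c : 0 <= c -> (forall t s, Rabs (g t - g s) <= c * Rabs (t - s)) ->
  forall x, continuous g x.
Proof.
  intros Hc H x. apply continuity_pt_filterlim. apply eps_cont_pt.
  intros eps He. exists (eps / (c + 1)). split. apply Rdiv_lt_0_compat; lra.
  intros y Hy. eapply Rle_lt_trans. apply H.
  apply Rle_lt_trans with ((c + 1) * Rabs (y - x)).
  apply Rmult_le_compat_r. apply Rabs_pos. lra.
  apply (Rmult_lt_compat_l (c + 1)) in Hy; [|lra].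
  replace ((c + 1) * (eps / (c + 1))) with eps in Hy by (field; lra). lra.
Qed.

Lemma RInt_inc_bound (g : R -> R) B t s : (forall x, continuous g x) ->
  (forall x, Rabs (g x) <= B) ->
  Rabs (RInt g 0 t - RInt g 0 s) <= B * Rabs (t - s).
Proof.
  intros Hc Hb.
  assert (Hex : forall a b, ex_RInt g a b) by (intros; apply (@ex_RInt_continuous R_CompleteNormedModule); intros; apply Hc).
  rewrite <- (RInt_Chasles g 0 s t) by auto. simpl.
  change (Rabs (RInt g 0 s + RInt g s t - RInt g 0 s) <= B * Rabs (t - s)).
  unfold Rminus at 1. rewrite (Rplus_comm (RInt g 0 s)), Rplus_assoc, Rplus_opp_r, Rplus_0_r.
  destruct (Rle_dec s t) as [H|H].
  - rewrite (Rabs_pos_eq (t - s)) by lra. rewrite Rmult_comm.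
    apply abs_RInt_le_const; auto.
  - rewrite <- opp_RInt_swap by auto. unfold opp; simpl. rewrite Rabs_Ropp.
    rewrite Rabs_minus_sym, (Rabs_pos_eq (s - t)) by lra. rewrite Rmult_comm.
    apply abs_RInt_le_const; auto. lra.
Qed.

Lemma RInt_abs_Phi (g phi Phi : R -> R) t : 0 <= t ->
  (forall x, continuous g x) -> (forall x, continuous phi x) ->
  (forall x, is_derive Phi x (phi x)) ->
  (forall s, 0 <= s <= t -> Rabs (g s) <= phi s) ->
  Rabs (RInt g 0 t) <= Phi t - Phi 0.
Proof.
  intros Ht Hg Hp HD Hb.
  assert (Hexg : ex_RInt g 0 t) by (apply (@ex_RInt_continuous R_CompleteNormedModule); intros; apply Hg).
  assert (Hexp : ex_RInt phi 0 t) by (apply (@ex_RInt_continuous R_CompleteNormedModule); intros; apply Hp).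
  assert (HI : RInt phi 0 t = Phi t - Phi 0).
  { apply is_RInt_unique. apply (is_RInt_derive Phi phi); intros; auto. }
  assert (H1 : RInt g 0 t <= RInt phi 0 t).
  { apply RInt_le; auto. intros x Hx. specialize (Hb x ltac:(lra)). apply Rabs_le_inv in Hb. lra. }
  assert (H2 : RInt (fun x => opp (phi x)) 0 t <= RInt g 0 t).
  { apply RInt_le; auto. apply (@ex_RInt_opp R_NormedModule); auto.
    intros x Hx. specialize (Hb x ltac:(lra)). apply Rabs_le_inv in Hb. unfold opp; simpl. lra. }
  rewrite (@RInt_opp R_CompleteNormedModule) in H2 by auto. unfold opp in H2; simpl in H2.
  apply Rabs_le. lra.
Qed.

Definition qf (n : nat) (x : R) := x ^ n / INR (Factorial.fact n).

Lemma qf_deriv n x : is_derive (qf (S n)) x (qf n x).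
Proof.
  unfold qf. auto_derive; auto.
  replace (match n with 0%nat => 1 | S _ => INR n + 1 end) with (INR (S n))
    by (destruct n; simpl; [ring|rewrite <- S_INR; reflexivity]).
  rewrite plus_INR, mult_INR.
  generalize (INR_fact_neq_0 n) (pos_INR n); intros.
  rewrite S_INR. generalize (INR_fact_lt_0 n); intros. field. split; [lra|nra].
Qed.

Lemma qf_cont n x : continuous (qf n) x.
Proof.
  apply (ex_derive_continuous (qf n)). destruct n.
  - unfold qf. simpl. auto_derive. auto.
  - eexists. apply qf_deriv.
Qed.

Lemma qf_nonneg n x : 0 <= x -> 0 <= qf n x.
Proof.
  intros. unfold qf. apply Rdiv_le_0_compat. apply pow_le; auto.
  generalize (INR_fact_neq_0 n) (pos_INR (Factorial.fact n)); intros; lra.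
Qed.


Definition RI (g : R -> R) (a b : R) : R := RInt g a b.

Fixpoint pic (G : (Z -> R) -> Z -> R) (u0 : Z -> R) (n : nat) : R -> Z -> R :=
  match n with
  | O => fun _ j => u0 j
  | S m => fun t j => u0 j + RI (fun s => G (pic G u0 m s) j) 0 t
  end.

Definition GB (G : (Z -> R) -> Z -> R) B := forall u j, Rabs (G u j) <= B.
Definition GL (G : (Z -> R) -> Z -> R) L :=
  forall u v d j, (forall k, Rabs (u k - v k) <= d) -> Rabs (G u j - G v j) <= L * d.

Lemma G_lip_cont G L c (w : R -> Z -> R) j : GL G L -> 0 <= L -> 0 <= c ->
  (forall k t s, Rabs (w t k - w s k) <= c * Rabs (t - s)) ->
  forall x, continuous (fun s => G (w s) j) x.
Proof.
  intros HL HL0 Hc Hw. apply (lip_cont _ (L * c)). apply Rmult_le_pos; auto.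
  intros t s. rewrite Rmult_assoc. apply HL. intros k. apply Hw.
Qed.

Lemma RI_inc G L B (w : R -> Z -> R) j c t s : GB G B -> GL G L -> 0 <= L -> 0 <= c ->
  (forall k t s, Rabs (w t k - w s k) <= c * Rabs (t - s)) ->
  Rabs (RI (fun x => G (w x) j) 0 t - RI (fun x => G (w x) j) 0 s) <= B * Rabs (t - s).
Proof.
  intros HB HL HL0 Hc Hw. unfold RI. apply RInt_inc_bound.
  apply (G_lip_cont G L c); auto. intros; apply HB.
Qed.

Lemma pic_lip G u0 B L : GB G B -> GL G L -> 0 <= L -> 0 <= B ->
  forall n j t s, Rabs (pic G u0 n t j - pic G u0 n s j) <= B * Rabs (t - s).
Proof.
  intros HB HL HL0 HB0. induction n as [|n IH]; intros j t s; simpl.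
  - rewrite Rminus_diag, Rabs_R0. apply Rmult_le_pos; auto. apply Rabs_pos.
  - replace (u0 j + RI (fun s0 => G (pic G u0 n s0) j) 0 t - (u0 j + RI (fun s0 => G (pic G u0 n s0) j) 0 s))
      with (RI (fun s0 => G (pic G u0 n s0) j) 0 t - RI (fun s0 => G (pic G u0 n s0) j) 0 s) by ring.
    apply (RI_inc G L B _ j B); auto.
Qed.

Lemma pic_gcont G u0 B L n j x : GB G B -> GL G L -> 0 <= L -> 0 <= B ->
  continuous (fun s => G (pic G u0 n s) j) x.
Proof.
  intros. apply (G_lip_cont G L B); auto. intros; eapply pic_lip; eauto.
Qed.

Lemma der_cont (f df : R -> R) : (forall x, is_derive f x (df x)) -> forall x, continuous f x.
Proof.
  intros H x. apply continuity_pt_filterlim. apply derivable_continuous_pt.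
  exists (df x). apply is_derive_Reals. apply H.
Qed.

Lemma pic_diff G u0 B L : GB G B -> GL G L -> 0 <= L -> 0 <= B ->
  forall n t j, 0 <= t -> Rabs (pic G u0 (S n) t j - pic G u0 n t j) <= B * L ^ n * qf (S n) t.
Proof.
  intros HB HL HL0 HB0. induction n as [|n IH]; intros t j Ht.
  - simpl. match goal with |- Rabs (?a + ?b - ?a) <= _ => replace (a + b - a) with b by ring end.
    unfold qf, RI. simpl. replace (B * 1 * ((t * 1) / 1)) with ((t - 0) * B) by field.
    apply abs_RInt_le_const; [lra| |intros; apply HB].
    apply (@ex_RInt_continuous R_CompleteNormedModule). intros. apply continuous_const.
  - change (Rabs ((u0 j + RI (fun s => G (pic G u0 (S n) s) j) 0 t) - (u0 j + RI (fun s => G (pic G u0 n s) j) 0 t))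
       <= B * L ^ S n * qf (S (S n)) t).
    replace ((u0 j + RI (fun s => G (pic G u0 (S n) s) j) 0 t) - (u0 j + RI (fun s => G (pic G u0 n s) j) 0 t))
      with (RI (fun s => G (pic G u0 (S n) s) j) 0 t - RI (fun s => G (pic G u0 n s) j) 0 t) by ring.
    unfold RI.
    rewrite <- (@RInt_minus R_CompleteNormedModule).
    2, 3: apply (@ex_RInt_continuous R_CompleteNormedModule); intros; eapply pic_gcont; eauto.
    assert (Hq0 : qf (S (S n)) 0 = 0) by (unfold qf; rewrite pow_i by lia; unfold Rdiv; ring).
    replace (B * L ^ S n * qf (S (S n)) t) with
      ((fun s => B * L ^ S n * qf (S (S n)) s) t - (fun s => B * L ^ S n * qf (S (S n)) s) 0)
      by (cbv beta; rewrite Hq0; ring).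
    apply (RInt_abs_Phi _ (fun s => B * L ^ S n * qf (S n) s) (fun s => B * L ^ S n * qf (S (S n)) s)); auto.
    + intros x. apply (lip_cont _ (L * B + L * B)). generalize (Rmult_le_pos L B HL0 HB0); lra.
      intros a b. change (Rabs ((G (pic G u0 (S n) a) j - G (pic G u0 n a) j) - (G (pic G u0 (S n) b) j - G (pic G u0 n b) j)) <= (L*B+L*B) * Rabs (a-b)).
      assert (H1 : Rabs (G (pic G u0 (S n) a) j - G (pic G u0 (S n) b) j) <= L * (B * Rabs (a - b)))
        by (apply HL; intros; eapply pic_lip; eauto).
      assert (H2 : Rabs (G (pic G u0 n a) j - G (pic G u0 n b) j) <= L * (B * Rabs (a - b)))
        by (apply HL; intros; eapply pic_lip; eauto).
      replace (G (pic G u0 (S n) a) j - G (pic G u0 n a) j - (G (pic G u0 (S n) b) j - G (pic G u0 n b) j))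
        with ((G (pic G u0 (S n) a) j - G (pic G u0 (S n) b) j) - (G (pic G u0 n a) j - G (pic G u0 n b) j)) by ring.
      eapply Rle_trans. apply Rabs_triang. rewrite Rabs_Ropp.
      replace ((L * B + L * B) * Rabs (a - b)) with (L * (B * Rabs (a - b)) + L * (B * Rabs (a - b))) by ring. lra.
    + apply (der_cont _ (fun s => B * L ^ S n * qf n s)). intros x. apply is_derive_scal. apply qf_deriv.
    + intros x. apply is_derive_scal. apply qf_deriv.
    + intros s Hs. change (Rabs (G (pic G u0 (S n) s) j - G (pic G u0 n s) j) <= B * L ^ S n * qf (S n) s).
      replace (B * L ^ S n * qf (S n) s) with (L * (B * L ^ n * qf (S n) s)) by (simpl; ring).
      apply HL. intros k. apply IH. lra.
Qed.


Definition ee B L T n := B * T * ((L * T) ^ n / INR (Factorial.fact n)).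

Lemma fact_pos n : 0 < INR (Factorial.fact n).
Proof. apply INR_fact_lt_0. Qed.

Lemma ee_nonneg B L T n : 0 <= B -> 0 <= L -> 0 <= T -> 0 <= ee B L T n.
Proof.
  intros. unfold ee. apply Rmult_le_pos. apply Rmult_le_pos; auto.
  apply Rdiv_le_0_compat. apply pow_le. apply Rmult_le_pos; auto. apply fact_pos.
Qed.

Lemma pic_diff_T G u0 B L T : GB G B -> GL G L -> 0 <= L -> 0 <= B ->
  forall n t j, 0 <= t <= T -> Rabs (pic G u0 (S n) t j - pic G u0 n t j) <= ee B L T n.
Proof.
  intros HB HL HL0 HB0 n t j Ht.
  apply Rle_trans with (B * L ^ n * qf (S n) t). apply pic_diff; auto; lra.
  unfold qf, ee.
  assert (H1 : t ^ S n <= T ^ S n) by (apply pow_incr; lra).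
  assert (H2 : INR (Factorial.fact n) <= INR (Factorial.fact (S n))).
  { apply le_INR. simpl. lia. }
  generalize (fact_pos n) (fact_pos (S n)); intros F1 F2.
  assert (H3 : t ^ S n / INR (Factorial.fact (S n)) <= T ^ S n / INR (Factorial.fact n)).
  { apply Rle_trans with (T ^ S n / INR (Factorial.fact (S n))).
    apply Rmult_le_compat_r; auto. left; apply Rinv_0_lt_compat; auto.
    apply Rmult_le_compat_l. apply pow_le; lra. apply Rinv_le_contravar; auto. }
  replace (B * T * ((L * T) ^ n / INR (Factorial.fact n))) with (B * L ^ n * (T ^ S n / INR (Factorial.fact n)))
    by (rewrite Rpow_mult_distr; simpl; field; lra).
  apply Rmult_le_compat_l; auto. apply Rmult_le_pos; auto. apply pow_le; auto.
Qed.

Lemma ee_half B L T : 0 <= B -> 0 <= L -> 0 <= T ->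
  exists n0, forall k, (n0 <= k)%nat -> 2 * ee B L T (S k) <= ee B L T k.
Proof.
  intros HB HL HT. destruct (INR_unbounded (2 * (L * T))) as [n0 Hn0].
  exists n0. intros k Hk.
  assert (Hk' : INR n0 <= INR k) by (apply le_INR; auto).
  unfold ee. 
  replace ((L * T) ^ S k / INR (Factorial.fact (S k))) with
    ((L * T) ^ k / INR (Factorial.fact k) * ((L * T) / INR (S k))).
  2: { change (Factorial.fact (S k)) with (S k * Factorial.fact k)%nat. rewrite mult_INR. simpl pow.
       generalize (fact_pos k) (pos_INR k); rewrite S_INR; intros. field. lra. }
  set (x := (L * T) ^ k / INR (Factorial.fact k)).
  assert (Hx : 0 <= x) by (unfold x; apply Rdiv_le_0_compat; [apply pow_le; apply Rmult_le_pos; auto|apply fact_pos]).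
  assert (Hr : L * T / INR (S k) <= / 2).
  { rewrite S_INR. apply Rmult_le_reg_r with (2 * (INR k + 1)). generalize (pos_INR k); lra.
    field_simplify; try (generalize (pos_INR k); lra); lra. }
  assert (0 <= B * T) by (apply Rmult_le_pos; auto).
  assert (0 <= L * T / INR (S k)) by (apply Rdiv_le_0_compat; [apply Rmult_le_pos; auto| rewrite S_INR; generalize (pos_INR k); lra]).
  assert (B * T * (x * (L * T / INR (S k))) <= B * T * (x * / 2)).
  { apply Rmult_le_compat_l; auto. apply Rmult_le_compat_l; auto. }
  lra.
Qed.

Lemma ee_lim B L T : 0 <= B -> 0 <= L -> 0 <= T -> forall eps, 0 < eps -> exists N, forall n, (N <= n)%nat -> ee B L T n < eps.
Proof.
  intros HB HL HT eps He.
  destruct (cv_speed_pow_fact (L * T) (eps / (B * T + 1))) as [N HN].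
  { apply Rdiv_lt_0_compat; auto. generalize (Rmult_le_pos B T HB HT); lra. }
  exists N. intros n Hn. specialize (HN n Hn). unfold R_dist in HN. rewrite Rminus_0_r in HN.
  apply Rabs_def2 in HN. destruct HN as [HN _]. unfold ee.
  assert (0 <= B * T) by (apply Rmult_le_pos; auto).
  apply Rle_lt_trans with ((B * T + 1) * ((L * T) ^ n / INR (Factorial.fact n))).
  - apply Rmult_le_compat_r. 2: lra.
    apply Rdiv_le_0_compat; [apply pow_le; apply Rmult_le_pos; auto|apply fact_pos].
  - apply (Rmult_lt_compat_l (B * T + 1)) in HN; [|lra].
    replace ((B * T + 1) * (eps / (B * T + 1))) with eps in HN by (field; lra). lra.
Qed.

Lemma pic_tail G u0 B L T n0 : GB G B -> GL G L -> 0 <= L -> 0 <= B -> 0 <= T ->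
  (forall k, (n0 <= k)%nat -> 2 * ee B L T (S k) <= ee B L T k) ->
  forall n m t j, (n0 <= n)%nat -> 0 <= t <= T ->
  Rabs (pic G u0 (n + m) t j - pic G u0 n t j) <= 2 * ee B L T n - 2 * ee B L T (n + m).
Proof.
  intros HB HL HL0 HB0 HT Hh n m t j Hn Ht. induction m as [|m IH].
  - rewrite Nat.add_0_r, Rminus_diag, Rabs_R0. lra.
  - rewrite Nat.add_succ_r.
    replace (pic G u0 (S (n + m)) t j - pic G u0 n t j) with
      ((pic G u0 (S (n + m)) t j - pic G u0 (n + m) t j) + (pic G u0 (n + m) t j - pic G u0 n t j)) by ring.
    eapply Rle_trans. apply Rabs_triang.
    generalize (pic_diff_T G u0 B L T HB HL HL0 HB0 (n + m) t j Ht) (Hh (n + m)%nat ltac:(lia)). lra.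
Qed.

Lemma lim_le (x : nat -> R) (l c d : R) : is_lim_seq x l ->
  (exists N, forall n, (N <= n)%nat -> Rabs (x n - c) <= d) -> Rabs (l - c) <= d.
Proof.
  intros Hl [N HN]. destruct (Rle_dec (Rabs (l - c)) d) as [h|h]; auto. exfalso.
  apply is_lim_seq_spec in Hl.
  assert (He : 0 < Rabs (l - c) - d) by lra.
  destruct (Hl (mkposreal _ He)) as [N2 HN2]. simpl in HN2.
  simpl in *.
  specialize (HN (max N N2) ltac:(lia)). specialize (HN2 (max N N2) ltac:(lia)).
  generalize (Rabs_triang (l - x (max N N2)) (x (max N N2) - c)).
  replace (l - x (max N N2) + (x (max N N2) - c)) with (l - c) by ring.
  rewrite Rabs_minus_sym in HN2. lra.
Qed.

Lemma pic_cauchy G u0 B L t j : GB G B -> GL G L -> 0 <= L -> 0 <= B -> 0 <= t ->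
  ex_finite_lim_seq (fun n => pic G u0 n t j).
Proof.
  intros HB HL HL0 HB0 Ht. apply ex_lim_seq_cauchy_corr. intros eps.
  destruct (ee_half B L t HB0 HL0 Ht) as [n0 Hn0].
  destruct (ee_lim B L t HB0 HL0 Ht (eps / 4)) as [N1 HN1]. generalize (cond_pos eps); lra.
  exists (max n0 N1). intros n m Hn Hm.
  set (N := max n0 N1).
  assert (A : forall p, (N <= p)%nat -> Rabs (pic G u0 p t j - pic G u0 N t j) <= 2 * ee B L t N).
  { intros p Hp. replace p with (N + (p - N))%nat by lia.
    eapply Rle_trans. apply (pic_tail G u0 B L t n0); auto; try lia; lra.
    generalize (ee_nonneg B L t (N + (p - N)) HB0 HL0 Ht). lra. }
  generalize (A n Hn) (A m Hm) (HN1 N ltac:(lia)); intros A1 A2 A3.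
  replace (pic G u0 n t j - pic G u0 m t j) with
    ((pic G u0 n t j - pic G u0 N t j) - (pic G u0 m t j - pic G u0 N t j)) by ring.
  eapply Rle_lt_trans. apply Rabs_triang. rewrite Rabs_Ropp. lra.
Qed.

Definition usol G u0 (t : R) (j : Z) : R := Lim_seq (fun n => pic G u0 n (Rmax t 0) j).

Lemma usol_lim G u0 B L t j : GB G B -> GL G L -> 0 <= L -> 0 <= B ->
  is_lim_seq (fun n => pic G u0 n (Rmax t 0) j) (usol G u0 t j).
Proof.
  intros. unfold usol. apply Lim_seq_correct'. eapply pic_cauchy; eauto. apply Rmax_r.
Qed.

Lemma usol_close G u0 B L T : GB G B -> GL G L -> 0 <= L -> 0 <= B -> 0 <= T ->
  exists n0, (forall k, (n0 <= k)%nat -> 2 * ee B L T (S k) <= ee B L T k) /\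
  forall n t j, (n0 <= n)%nat -> 0 <= t <= T -> Rabs (usol G u0 t j - pic G u0 n t j) <= 2 * ee B L T n.
Proof.
  intros HB HL HL0 HB0 HT. destruct (ee_half B L T HB0 HL0 HT) as [n0 Hn0].
  exists n0. split; auto. intros n t j Hn Ht.
  generalize (usol_lim G u0 B L t j HB HL HL0 HB0). rewrite rmax_pos by lra. intros Hl.
  apply (lim_le _ _ _ _ Hl). exists n. intros p Hp. replace p with (n + (p - n))%nat by lia.
  eapply Rle_trans. apply (pic_tail G u0 B L T n0); auto.
  generalize (ee_nonneg B L T (n + (p - n)) HB0 HL0 HT). lra.
Qed.

Lemma rmax_lip t s : Rabs (Rmax t 0 - Rmax s 0) <= Rabs (t - s).
Proof.
  generalize (Rle_abs (t - s)) (Rle_abs (- (t - s))). rewrite Rabs_Ropp. intros.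
  apply Rabs_le. unfold Rmax; destruct (Rle_dec t 0), (Rle_dec s 0); lra.
Qed.

Lemma usol_lip G u0 B L : GB G B -> GL G L -> 0 <= L -> 0 <= B ->
  forall k t s, Rabs (usol G u0 t k - usol G u0 s k) <= B * Rabs (t - s).
Proof.
  intros HB HL HL0 HB0 k t s.
  generalize (is_lim_seq_minus' _ _ _ _ (usol_lim G u0 B L t k HB HL HL0 HB0) (usol_lim G u0 B L s k HB HL HL0 HB0)).
  intros Hl. rewrite <- (Rminus_0_r (usol G u0 t k - usol G u0 s k)).
  apply (lim_le _ _ _ _ Hl). exists O. intros n _. rewrite Rminus_0_r.
  eapply Rle_trans. apply (pic_lip G u0 B L); auto.
  apply Rmult_le_compat_l; auto. apply rmax_lip.
Qed.

Lemma pic_at0 G u0 n j : pic G u0 n 0 j = u0 j.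
Proof. destruct n; simpl; auto. unfold RI. rewrite RInt_point. unfold zero; simpl. ring. Qed.

Lemma usol0 G u0 B L j : GB G B -> GL G L -> 0 <= L -> 0 <= B -> usol G u0 0 j = u0 j.
Proof.
  intros. generalize (usol_lim G u0 B L 0 j H H0 H1 H2). rewrite rmax_pos by lra. intros Hl.
  assert (Rabs (usol G u0 0 j - u0 j) <= 0).
  { apply (lim_le _ _ _ _ Hl). exists O. intros n _. rewrite pic_at0, Rminus_diag, Rabs_R0. lra. }
  generalize (Rabs_pos (usol G u0 0 j - u0 j)); intros.
  assert (Rabs (usol G u0 0 j - u0 j) = 0) by lra.
  apply Rabs_eq_0 in H5. lra.
Qed.


Lemma small_zero x : (forall eps, 0 < eps -> Rabs x < eps) -> x = 0.
Proof.
  intros H. destruct (Req_dec x 0) as [h|h]; auto. exfalso.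
  specialize (H (Rabs x) (Rabs_pos_lt x h)). lra.
Qed.

Lemma usol_int G u0 B L t j : GB G B -> GL G L -> 0 <= L -> 0 <= B -> 0 <= t ->
  usol G u0 t j = u0 j + RI (fun s => G (usol G u0 s) j) 0 t.
Proof.
  intros HB HL HL0 HB0 Ht.
  destruct (usol_close G u0 B L t HB HL HL0 HB0 Ht) as [n0 [Hh Hc]].
  assert (Hgu : forall x, continuous (fun s => G (usol G u0 s) j) x).
  { apply (G_lip_cont G L B); auto. intros; eapply usol_lip; eauto. }
  apply Rminus_diag_uniq. apply small_zero. intros eps He.
  set (c := 1 + 2 * t * L).
  assert (Hc0 : 0 < c) by (unfold c; generalize (Rmult_le_pos t L Ht HL0); lra).
  destruct (ee_lim B L t HB0 HL0 Ht (eps / c)) as [N1 HN1]. apply Rdiv_lt_0_compat; auto.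
  set (n := max n0 N1).
  assert (E1 : Rabs (usol G u0 t j - pic G u0 (S n) t j) <= ee B L t n).
  { eapply Rle_trans. apply Hc. lia. lra. apply Hh. lia. }
  assert (E2 : Rabs (pic G u0 (S n) t j - (u0 j + RI (fun s => G (usol G u0 s) j) 0 t)) <= t * (L * (2 * ee B L t n))).
  { change (pic G u0 (S n) t j) with (u0 j + RI (fun s => G (pic G u0 n s) j) 0 t).
    replace (u0 j + RI (fun s => G (pic G u0 n s) j) 0 t - (u0 j + RI (fun s => G (usol G u0 s) j) 0 t))
      with (RI (fun s => G (pic G u0 n s) j) 0 t - RI (fun s => G (usol G u0 s) j) 0 t) by ring.
    unfold RI.
    assert (X1 : ex_RInt (fun s => G (pic G u0 n s) j) 0 t).
    { apply (@ex_RInt_continuous R_CompleteNormedModule). intros; eapply pic_gcont; eauto. }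
    assert (X2 : ex_RInt (fun s => G (usol G u0 s) j) 0 t).
    { apply (@ex_RInt_continuous R_CompleteNormedModule). intros; apply Hgu. }
    rewrite <- (@RInt_minus R_CompleteNormedModule) by auto.
    replace t with (t - 0) at 2 by ring.
    apply abs_RInt_le_const; auto. apply (@ex_RInt_minus R_NormedModule); auto.
    intros s Hs. change (Rabs (G (pic G u0 n s) j - G (usol G u0 s) j) <= L * (2 * ee B L t n)).
    apply HL. intros k. rewrite Rabs_minus_sym. apply Hc; auto. lia. }
  generalize (HN1 n ltac:(lia)); intros E3.
  replace (usol G u0 t j - (u0 j + RI (fun s => G (usol G u0 s) j) 0 t)) with
    ((usol G u0 t j - pic G u0 (S n) t j) + (pic G u0 (S n) t j - (u0 j + RI (fun s => G (usol G u0 s) j) 0 t))) by ring.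
  eapply Rle_lt_trans. apply Rabs_triang.
  apply Rle_lt_trans with (c * ee B L t n).
  - unfold c. replace ((1 + 2 * t * L) * ee B L t n) with (ee B L t n + t * (L * (2 * ee B L t n))) by ring. lra.
  - apply (Rmult_lt_compat_l c) in E3; auto. replace (c * (eps / c)) with eps in E3 by (field; lra). lra.
Qed.

Lemma usol_der G u0 B L t j : GB G B -> GL G L -> 0 <= L -> 0 <= B -> 0 < t ->
  derivable_pt_lim (fun s => usol G u0 s j) t (G (usol G u0 t) j).
Proof.
  intros HB HL HL0 HB0 Ht.
  assert (Hgu : forall x, continuous (fun s => G (usol G u0 s) j) x).
  { apply (G_lip_cont G L B); auto. intros; eapply usol_lip; eauto. }
  apply is_derive_Reals.
  apply (is_derive_ext_loc (fun s => u0 j + RI (fun x => G (usol G u0 x) j) 0 s)).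
  { apply (filter_imp (fun s => 0 < s)). intros s Hs. symmetry. apply usol_int with B L; auto. lra.
    apply loc_pos; auto. }
  assert (HD : is_derive (fun s => RI (fun x => G (usol G u0 x) j) 0 s) t (G (usol G u0 t) j)).
  { unfold RI. apply (is_derive_RInt (fun x => G (usol G u0 x) j) (fun b => RInt (fun x => G (usol G u0 x) j) 0 b) 0 t).
    apply filter_forall. intros b. apply (@RInt_correct R_CompleteNormedModule).
    apply (@ex_RInt_continuous R_CompleteNormedModule). intros; apply Hgu.
    apply Hgu. }
  apply is_derive_Reals in HD. apply is_derive_Reals.
  replace (G (usol G u0 t) j) with (0 + G (usol G u0 t) j) by ring.
  apply (derivable_pt_lim_plus (fun _ => u0 j) (fun s => RI (fun x => G (usol G u0 x) j) 0 s)); auto.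
  apply derivable_pt_lim_const.
Qed.

Lemma picard G u0 B L : GB G B -> GL G L -> 0 <= L -> 0 <= B ->
  exists u : R -> Z -> R, (forall j, u 0 j = u0 j) /\
    (forall j t s, Rabs (u t j - u s j) <= B * Rabs (t - s)) /\
    (forall j t, 0 < t -> derivable_pt_lim (fun s => u s j) t (G (u t) j)).
Proof.
  intros. exists (usol G u0). split; [|split].
  - intros; eapply usol0; eauto.
  - intros; eapply usol_lip; eauto.
  - intros; eapply usol_der; eauto.
Qed.


Definition clamp (M x : R) := Rmin (Rmax x 0) M.

Lemma clamp_cases M x : 0 <= M ->
  (x <= 0 /\ clamp M x = 0) \/ (0 <= x <= M /\ clamp M x = x) \/ (M <= x /\ clamp M x = M).
Proof.
  intros HM. unfold clamp. destruct (Rle_dec x 0) as [h|h].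
  - rewrite (Rmax_right x 0) by lra. rewrite Rmin_left by lra. left; split; auto.
  - rewrite (Rmax_left x 0) by lra. destruct (Rle_dec x M) as [h'|h'].
    + rewrite Rmin_left by lra. right; left; split; auto; lra.
    + rewrite Rmin_right by lra. right; right; split; auto; lra.
Qed.

Lemma clamp_range M x : 0 <= M -> 0 <= clamp M x <= M.
Proof. intros H. destruct (clamp_cases M x H) as [[? ->]|[[? ->]|[? ->]]]; lra. Qed.
Lemma clamp_lip M x y : 0 <= M -> Rabs (clamp M x - clamp M y) <= Rabs (x - y).
Proof.
  intros H. generalize (Rle_abs (x - y)) (Rle_abs (- (x - y))). rewrite Rabs_Ropp. intros.
  apply Rabs_le.
  destruct (clamp_cases M x H) as [[? ->]|[[? ->]|[? ->]]];
  destruct (clamp_cases M y H) as [[? ->]|[[? ->]|[? ->]]]; lra.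
Qed.
Lemma clamp_id M x : 0 <= x <= M -> clamp M x = x.
Proof. intros. destruct (clamp_cases M x ltac:(lra)) as [[? ->]|[[? ->]|[? ->]]]; lra. Qed.
Lemma clamp_neg M x : 0 <= M -> x < 0 -> clamp M x = 0.
Proof. intros H ?. destruct (clamp_cases M x H) as [[? ->]|[[? ->]|[? ->]]]; lra. Qed.
Lemma clamp_big M x : 0 <= M -> M < x -> clamp M x = M.
Proof. intros H ?. destruct (clamp_cases M x H) as [[? ->]|[[? ->]|[? ->]]]; lra. Qed.

Definition Gc s0 tau eta lambda (I0 : Z -> R) M (u : Z -> R) (j : Z) : R :=
  freact s0 tau eta (clamp M (u j)) + I0 j +
  lambda * (clamp M (u (j - 1)%Z) - 2 * clamp M (u j) + clamp M (u (j + 1)%Z)).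

Lemma Gc_GB s0 tau eta lambda I0 M : 0 <= s0 -> 0 <= tau -> 0 <= eta -> 0 <= lambda -> 0 <= M ->
  (forall j, 0 <= I0 j <= 1) ->
  GB (Gc s0 tau eta lambda I0 M) (s0 + eta * M + 1 + 4 * lambda * M).
Proof.
  intros. intros u j. unfold Gc.
  generalize (f_bound s0 tau eta M (clamp M (u j)) H H0 H1 (clamp_range M (u j) H3)).
  generalize (clamp_range M (u j) H3) (clamp_range M (u (j-1)%Z) H3) (clamp_range M (u (j+1)%Z) H3) (H4 j).
  intros A1 A2 A3 A4 A5. apply Rabs_le_inv in A5.
  set (c1 := clamp M (u j)) in *. set (c2 := clamp M (u (j-1)%Z)) in *. set (c3 := clamp M (u (j+1)%Z)) in *.
  assert (- (2 * M) <= c2 - 2 * c1 + c3 <= 2 * M) by lra.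
  assert (- (lambda * (2 * M)) <= lambda * (c2 - 2 * c1 + c3) <= lambda * (2 * M)) by (split; nra).
  apply Rabs_le. split; nra.
Qed.

Lemma Gc_GL s0 tau eta lambda I0 M : 0 <= s0 -> 0 <= tau -> 0 <= eta -> 0 <= lambda -> 0 <= M ->
  GL (Gc s0 tau eta lambda I0 M) (s0 * tau + eta + 4 * lambda).
Proof.
  intros. intros u v d j Hd. unfold Gc.
  assert (Hc : forall k, Rabs (clamp M (u k) - clamp M (v k)) <= d).
  { intros k. eapply Rle_trans. apply clamp_lip; auto. apply Hd. }
  generalize (f_lip0 s0 tau eta (clamp M (u j)) (clamp M (v j)) H H0 H1 (proj1 (clamp_range M _ H3)) (proj1 (clamp_range M _ H3))).
  generalize (Hc j) (Hc (j-1)%Z) (Hc (j+1)%Z). intros B1 B2 B3 F.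
  set (a1 := clamp M (u j)) in *. set (a2 := clamp M (u (j-1)%Z)) in *. set (a3 := clamp M (u (j+1)%Z)) in *.
  set (b1 := clamp M (v j)) in *. set (b2 := clamp M (v (j-1)%Z)) in *. set (b3 := clamp M (v (j+1)%Z)) in *.
  apply Rabs_le_inv in B1. apply Rabs_le_inv in B2. apply Rabs_le_inv in B3.
  assert (F' : Rabs (freact s0 tau eta a1 - freact s0 tau eta b1) <= (s0 * tau + eta) * d).
  { eapply Rle_trans. apply F. apply Rmult_le_compat_l. generalize (Rmult_le_pos s0 tau H H0); lra. apply Rabs_le; lra. }
  apply Rabs_le_inv in F'.
  assert (Hl : Rabs (lambda * ((a2 - 2 * a1 + a3) - (b2 - 2 * b1 + b3))) <= lambda * (4 * d)).
  { rewrite Rabs_mult, Rabs_pos_eq by auto. apply Rmult_le_compat_l; auto. apply Rabs_le; lra. }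
  apply Rabs_le_inv in Hl.
  apply Rabs_le.
  replace (freact s0 tau eta a1 + I0 j + lambda * (a2 - 2 * a1 + a3) - (freact s0 tau eta b1 + I0 j + lambda * (b2 - 2 * b1 + b3)))
    with ((freact s0 tau eta a1 - freact s0 tau eta b1) + lambda * ((a2 - 2 * a1 + a3) - (b2 - 2 * b1 + b3))) by ring.
  split; nra.
Qed.


Lemma lip_rc0 (g : R -> R) B : 0 <= B -> (forall t s, Rabs (g t - g s) <= B * Rabs (t - s)) ->
  forall eps, 0 < eps -> exists delta, 0 < delta /\ forall t, 0 <= t < delta -> Rabs (g t - g 0) < eps.
Proof.
  intros HB H eps He. exists (eps / (B + 1)). split. apply Rdiv_lt_0_compat; lra.
  intros t Ht. eapply Rle_lt_trans. apply H. rewrite Rminus_0_r, Rabs_pos_eq by lra.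
  apply Rle_lt_trans with ((B + 1) * t). nra.
  assert (H' : (B + 1) * t < (B + 1) * (eps / (B + 1))) by (apply Rmult_lt_compat_l; lra).
  replace ((B + 1) * (eps / (B + 1))) with eps in H' by (field; lra). lra.
Qed.

Lemma exist_sol s0 tau eta lambda I0 M u0 :
  0 < s0 -> 0 < tau -> 0 < eta -> 0 < lambda -> (forall j, 0 <= I0 j <= 1) -> 0 <= M ->
  s0 + 1 <= eta * M -> (forall j, 0 <= u0 j <= M) ->
  exists u : R -> Z -> R, (forall j, u 0 j = u0 j) /\
    (exists B, 0 <= B /\ forall j t s, Rabs (u t j - u s j) <= B * Rabs (t - s)) /\
    (forall t j, 0 <= t -> 0 <= u t j <= M) /\
    (forall j t, 0 < t -> derivable_pt_lim (fun s => u s j) t (rhs s0 tau eta lambda I0 (u t) j)).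
Proof.
  intros Hs0 Ht He Hl HI HM HM2 Hu0.
  set (B := s0 + eta * M + 1 + 4 * lambda * M).
  assert (HB0 : 0 <= B) by (unfold B; generalize (Rmult_le_pos eta M ltac:(lra) HM) (Rmult_le_pos (4*lambda) M ltac:(lra) HM); lra).
  set (L := s0 * tau + eta + 4 * lambda).
  assert (HL0 : 0 <= L) by (unfold L; generalize (Rmult_le_pos s0 tau ltac:(lra) ltac:(lra)); lra).
  destruct (picard (Gc s0 tau eta lambda I0 M) u0 B L) as [u [U0 [Ulip Uder]]]; auto.
  apply Gc_GB; auto; lra. apply Gc_GL; auto; lra.
  assert (Ubd : forall t j, 0 <= t -> Rabs (u t j) <= M + B * t).
  { intros t j Ht0. specialize (Ulip j t 0). rewrite U0, Rminus_0_r, (Rabs_pos_eq t) in Ulip by lra.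
    specialize (Hu0 j). apply Rabs_le_inv in Ulip. apply Rabs_le. nra. }
  assert (Urc : forall j eps, 0 < eps -> exists delta, 0 < delta /\ forall t, 0 <= t < delta -> Rabs (u t j - u 0 j) < eps).
  { intros j. apply (lip_rc0 (fun t => u t j) B); auto. }
  assert (Upos : forall t j, 0 <= t -> 0 <= u t j).
  { intros t j Ht0.
    assert (- u t j <= 0); [|lra].
    apply (cmp (fun t j => - u t j) (fun t j => - Gc s0 tau eta lambda I0 M (u t) j) 1 t); try lra.
    - intros k. rewrite U0. specialize (Hu0 k). lra.
    - intros k eps Heps. destruct (Urc k eps Heps) as [d [Hd Hd']]. exists d; split; auto.
      intros t' Ht'. replace (- u t' k - - u 0 k) with (- (u t' k - u 0 k)) by ring. rewrite Rabs_Ropp. auto.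
    - intros k s Hs. apply (derivable_pt_lim_opp (fun x => u x k)). apply Uder; auto.
    - exists (M + B * t). intros t' k Ht'. specialize (Ubd t' k ltac:(lra)). apply Rabs_le_inv in Ubd.
      assert (B * t' <= B * t) by (apply Rmult_le_compat_l; lra). lra.
    - intros t' k b Ht' Hb Hall Hp. unfold Gc. rewrite (clamp_neg M (u t' k)) by lra. rewrite f_zero.
      generalize (clamp_range M (u t' (k-1)%Z) HM) (clamp_range M (u t' (k+1)%Z) HM) (HI k); intros.
      assert (0 <= lambda * (clamp M (u t' (k - 1)%Z) - 2 * 0 + clamp M (u t' (k + 1)%Z))) by (apply Rmult_le_pos; lra).
      lra. }
  assert (Ule : forall t j, 0 <= t -> u t j <= M).
  { intros t j Ht0.
    assert (u t j - M <= 0); [|lra].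
    apply (cmp (fun t j => u t j - M) (fun t j => Gc s0 tau eta lambda I0 M (u t) j) 1 t); try lra.
    - intros k. rewrite U0. specialize (Hu0 k). lra.
    - intros k eps Heps. destruct (Urc k eps Heps) as [d [Hd Hd']]. exists d; split; auto.
      intros t' Ht'. replace (u t' k - M - (u 0 k - M)) with (u t' k - u 0 k) by ring. auto.
    - intros k s Hs. replace (Gc s0 tau eta lambda I0 M (u s) k) with (Gc s0 tau eta lambda I0 M (u s) k - 0) by ring.
      apply (derivable_pt_lim_minus (fun x => u x k) (fun _ => M)). apply Uder; auto. apply derivable_pt_lim_const.
    - exists (M + B * t). intros t' k Ht'. specialize (Ubd t' k ltac:(lra)). apply Rabs_le_inv in Ubd.
      assert (B * t' <= B * t) by (apply Rmult_le_compat_l; lra). lra.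
    - intros t' k b Ht' Hb Hall Hp. unfold Gc. rewrite (clamp_big M (u t' k)) by lra.
      generalize (f_upper s0 tau eta M ltac:(lra)).
      generalize (clamp_range M (u t' (k-1)%Z) HM) (clamp_range M (u t' (k+1)%Z) HM) (HI k); intros.
      assert (lambda * (clamp M (u t' (k - 1)%Z) - 2 * M + clamp M (u t' (k + 1)%Z)) <= 0).
      { assert (clamp M (u t' (k - 1)%Z) - 2 * M + clamp M (u t' (k + 1)%Z) <= 0) by lra.
        assert (0 <= lambda * - (clamp M (u t' (k - 1)%Z) - 2 * M + clamp M (u t' (k + 1)%Z))) by (apply Rmult_le_pos; lra).
        lra. }
      lra. }
  exists u. split; auto. split. exists B; split; auto. split.
  - intros; split; auto.
  - intros j t Ht0. 
    replace (rhs s0 tau eta lambda I0 (u t) j) with (Gc s0 tau eta lambda I0 M (u t) j).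
    apply Uder; auto.
    unfold Gc, rhs, dlap.
    rewrite !clamp_id; auto; split; try apply Upos; try apply Ule; lra.
Qed.


Definition rc0 (g : R -> R) := forall eps, 0 < eps -> exists delta, 0 < delta /\ forall t, 0 <= t < delta -> Rabs (g t - g 0) < eps.

Lemma cmp_sol s0 tau eta lambda I0 (u v : R -> Z -> R) T Rb :
  0 < s0 -> 0 < tau -> 0 < eta -> 0 < lambda ->
  (forall j t, 0 < t -> derivable_pt_lim (fun s => u s j) t (rhs s0 tau eta lambda I0 (u t) j)) ->
  (forall j t, 0 < t -> derivable_pt_lim (fun s => v s j) t (rhs s0 tau eta lambda I0 (v t) j)) ->
  (forall j, rc0 (fun t => u t j)) -> (forall j, rc0 (fun t => v t j)) ->
  (forall t j, 0 <= t <= T -> Rabs (u t j) <= Rb /\ Rabs (v t j) <= Rb) ->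
  (forall j, u 0 j <= v 0 j) -> forall t j, 0 <= t <= T -> u t j <= v t j.
Proof.
  intros Hs0 Ht He Hl Hu Hv Hru Hrv Hb H0 t j Htj.
  set (E := s0 * tau * exp (tau * Rb)).
  assert (HE : 0 <= E) by (unfold E; generalize (exp_pos (tau * Rb)); intros; apply Rmult_le_pos; [apply Rmult_le_pos|]; lra).
  assert (u t j - v t j <= 0); [|lra].
  apply (cmp (fun t j => u t j - v t j) (fun t j => rhs s0 tau eta lambda I0 (u t) j - rhs s0 tau eta lambda I0 (v t) j)
    (E + 2 * lambda + 1) T); try lra.
  - intros k. specialize (H0 k). lra.
  - intros k eps Heps. destruct (Hru k (eps/2)) as [d1 [Hd1 Hd1']]. lra.
    destruct (Hrv k (eps/2)) as [d2 [Hd2 Hd2']]. lra.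
    exists (Rmin d1 d2). split. apply Rmin_glb_lt; auto.
    intros t' Ht'. generalize (Rmin_l d1 d2) (Rmin_r d1 d2); intros.
    specialize (Hd1' t' ltac:(lra)). specialize (Hd2' t' ltac:(lra)). simpl in *.
    replace (u t' k - v t' k - (u 0 k - v 0 k)) with ((u t' k - u 0 k) - (v t' k - v 0 k)) by ring.
    eapply Rle_lt_trans. apply Rabs_triang. rewrite Rabs_Ropp. lra.
  - intros k s Hs. apply (derivable_pt_lim_minus (fun x => u x k) (fun x => v x k)); auto.
  - exists (2 * Rb). intros t' k Ht'. destruct (Hb t' k Ht') as [A1 A2].
    apply Rabs_le_inv in A1. apply Rabs_le_inv in A2. lra.
  - intros t' k b Ht' Hb0 Hall Hp. unfold rhs, dlap.
    destruct (Hb t' k ltac:(lra)) as [A1 A2]. apply Rabs_le_inv in A2.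
    generalize (f_onesided s0 tau eta Rb (u t' k) (v t' k) ltac:(lra) ltac:(lra) ltac:(lra) ltac:(lra) ltac:(lra)).
    fold E. intros F.
    generalize (Hall k) (Hall (k - 1)%Z) (Hall (k + 1)%Z). intros W1 W2 W3.
    assert (E * (u t' k - v t' k) <= E * b) by (apply Rmult_le_compat_l; auto).
    assert (lambda * ((u t' (k-1)%Z - v t' (k-1)%Z) - 2 * (u t' k - v t' k) + (u t' (k+1)%Z - v t' (k+1)%Z)) <= lambda * (2 * b)).
    { apply Rmult_le_compat_l; lra. }
    replace (freact s0 tau eta (u t' k) + I0 k + lambda * (u t' (k - 1)%Z - 2 * u t' k + u t' (k + 1)%Z) -
      (freact s0 tau eta (v t' k) + I0 k + lambda * (v t' (k - 1)%Z - 2 * v t' k + v t' (k + 1)%Z)))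
    with ((freact s0 tau eta (u t' k) - freact s0 tau eta (v t' k)) +
          lambda * ((u t' (k-1)%Z - v t' (k-1)%Z) - 2 * (u t' k - v t' k) + (u t' (k+1)%Z - v t' (k+1)%Z))) by ring.
    lra.
Qed.

Lemma mono_lim_sig (phi : R -> R) M : (forall t s, 0 <= t <= s -> phi t <= phi s) -> (forall t, 0 <= t -> phi t <= M) ->
  { l : R | forall eps, 0 < eps -> exists T, 0 <= T /\ forall t, T <= t -> Rabs (phi t - l) < eps }.
Proof.
  intros Hm Hb.
  set (E := fun x => exists t, 0 <= t /\ x = phi t).
  assert (HbE : bound E) by (exists M; intros x [t [Ht ->]]; auto).
  assert (HeE : exists x, E x) by (exists (phi 0); exists 0; split; auto; lra).
  destruct (completeness E HbE HeE) as [l [Hub Hlub]].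
  exists l. intros eps Heps.
  destruct (Rle_dec (l - eps) l) as [_|]; [|lra].
  assert (exists t, 0 <= t /\ l - eps < phi t).
  { apply Classical_Prop.NNPP. intros Hn.
    assert (is_upper_bound E (l - eps)).
    { intros x [t [Ht ->]]. destruct (Rle_dec (phi t) (l - eps)); auto. exfalso. apply Hn. exists t; split; auto; lra. }
    specialize (Hlub _ H). lra. }
  destruct H as [t0 [Ht0 Hp]]. exists t0. split; auto. intros t Ht.
  assert (phi t <= l) by (apply Hub; exists t; split; auto; lra).
  generalize (Hm t0 t ltac:(lra)); intros. apply Rabs_def1; lra.
Qed.

Lemma lim_bounds (phi : R -> R) l a b : (forall t, 0 <= t -> a <= phi t <= b) ->
  (forall eps, 0 < eps -> exists T, 0 <= T /\ forall t, T <= t -> Rabs (phi t - l) < eps) -> a <= l <= b.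
Proof.
  intros H Hl. split.
  - destruct (Rle_dec a l) as [h|h]; auto. exfalso.
    destruct (Hl (a - l)) as [T [HT HT']]. lra. specialize (HT' T (Rle_refl _)). specialize (H T HT).
    apply Rabs_def2 in HT'. lra.
  - destruct (Rle_dec l b) as [h|h]; auto. exfalso.
    destruct (Hl (l - b)) as [T [HT HT']]. lra. specialize (HT' T (Rle_refl _)). specialize (H T HT).
    apply Rabs_def2 in HT'. lra.
Qed.


Lemma rhs_lip s0 tau eta lambda I0 (x y : Z -> R) j d :
  0 < s0 -> 0 < tau -> 0 < eta -> 0 < lambda -> 0 <= x j -> 0 <= y j ->
  Rabs (x j - y j) <= d -> Rabs (x (j-1)%Z - y (j-1)%Z) <= d -> Rabs (x (j+1)%Z - y (j+1)%Z) <= d ->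
  Rabs (rhs s0 tau eta lambda I0 x j - rhs s0 tau eta lambda I0 y j) <= (s0 * tau + eta + 4 * lambda) * d.
Proof.
  intros Hs0 Ht He Hl Hx Hy D1 D2 D3. unfold rhs, dlap.
  generalize (f_lip0 s0 tau eta (x j) (y j) ltac:(lra) ltac:(lra) ltac:(lra) Hx Hy). intros F.
  assert (F' : Rabs (freact s0 tau eta (x j) - freact s0 tau eta (y j)) <= (s0 * tau + eta) * d).
  { eapply Rle_trans. apply F. apply Rmult_le_compat_l; auto. generalize (Rmult_le_pos s0 tau ltac:(lra) ltac:(lra)); lra. }
  apply Rabs_le_inv in F'. apply Rabs_le_inv in D1. apply Rabs_le_inv in D2. apply Rabs_le_inv in D3.
  assert (Hl' : Rabs (lambda * ((x (j-1)%Z - y (j-1)%Z) - 2 * (x j - y j) + (x (j+1)%Z - y (j+1)%Z))) <= lambda * (4 * d)).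
  { rewrite Rabs_mult, Rabs_pos_eq by lra. apply Rmult_le_compat_l; [lra|]. apply Rabs_le; lra. }
  apply Rabs_le_inv in Hl'. apply Rabs_le.
  replace (freact s0 tau eta (x j) + I0 j + lambda * (x (j - 1)%Z - 2 * x j + x (j + 1)%Z) -
     (freact s0 tau eta (y j) + I0 j + lambda * (y (j - 1)%Z - 2 * y j + y (j + 1)%Z)))
    with ((freact s0 tau eta (x j) - freact s0 tau eta (y j)) + lambda * ((x (j-1)%Z - y (j-1)%Z) - 2 * (x j - y j) + (x (j+1)%Z - y (j+1)%Z))) by ring.
  split; nra.
Qed.

Lemma stat_lim s0 tau eta lambda I0 (u : R -> Z -> R) (l : Z -> R) B :
  0 < s0 -> 0 < tau -> 0 < eta -> 0 < lambda -> 0 <= B ->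
  (forall j t s, Rabs (u t j - u s j) <= B * Rabs (t - s)) ->
  (forall t j, 0 <= t -> 0 <= u t j) -> (forall j, 0 <= l j) ->
  (forall j t, 0 < t -> derivable_pt_lim (fun s => u s j) t (rhs s0 tau eta lambda I0 (u t) j)) ->
  (forall j eps, 0 < eps -> exists T, 0 <= T /\ forall t, T <= t -> Rabs (u t j - l j) < eps) ->
  forall j, rhs s0 tau eta lambda I0 l j = 0.
Proof.
  intros Hs0 Ht He Hl HB Hlip Hpos Hlpos Hd Hc j.
  apply small_zero. intros eps Heps.
  set (C := s0 * tau + eta + 4 * lambda).
  assert (HC : 0 <= C) by (unfold C; generalize (Rmult_le_pos s0 tau ltac:(lra) ltac:(lra)); lra).
  set (d := eps / (C + 3)).
  assert (Hd0 : 0 < d) by (unfold d; apply Rdiv_lt_0_compat; lra).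
  destruct (Hc j d Hd0) as [T1 [HT1 HT1']].
  destruct (Hc (j-1)%Z d Hd0) as [T2 [HT2 HT2']].
  destruct (Hc (j+1)%Z d Hd0) as [T3 [HT3 HT3']].
  set (T := Rmax T1 (Rmax T2 T3) + 1).
  assert (HT : T1 < T /\ T2 < T /\ T3 < T).
  { unfold T. generalize (Rmax_l T1 (Rmax T2 T3)) (Rmax_r T1 (Rmax T2 T3)) (Rmax_l T2 T3) (Rmax_r T2 T3). lra. }
  destruct (mvt_open (fun s => u s j) (fun s => rhs s0 tau eta lambda I0 (u s) j) T (T + 1)) as [c [Hc1 Hc2]].
  - lra.
  - intros c Hc'. apply continuity_pt_filterlim. apply (lip_cont (fun s => u s j) B HB). intros; apply Hlip.
  - intros c Hc'. apply Hd. lra.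
  - replace (T + 1 - T) with 1 in Hc2 by ring. rewrite Rmult_1_r in Hc2.
    assert (A1 : Rabs (u (T + 1) j - u T j) <= 2 * d).
    { generalize (HT1' (T + 1) ltac:(lra)) (HT1' T ltac:(lra)); intros X1 X2.
      replace (u (T + 1) j - u T j) with ((u (T + 1) j - l j) - (u T j - l j)) by ring.
      eapply Rle_trans. apply Rabs_triang. rewrite Rabs_Ropp. lra. }
    assert (A2 : Rabs (rhs s0 tau eta lambda I0 (u c) j - rhs s0 tau eta lambda I0 l j) <= C * d).
    { apply rhs_lip; auto. apply Hpos; lra. left; apply HT1'; lra. left; apply HT2'; lra. left; apply HT3'; lra. }
    rewrite <- Hc2 in A2.
    replace (rhs s0 tau eta lambda I0 l j) with ((u (T + 1) j - u T j) - ((u (T + 1) j - u T j) - rhs s0 tau eta lambda I0 l j)) by ring.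
    eapply Rle_lt_trans. apply Rabs_triang. rewrite Rabs_Ropp.
    apply Rle_lt_trans with ((C + 2) * d). lra.
    unfold d. apply (Rmult_lt_reg_l (C + 3)). lra. field_simplify; lra.
Qed.

Lemma zero_nb s0 tau eta lambda I0 (l : Z -> R) k :
  0 < lambda -> (forall j, 0 <= I0 j) -> (forall j, 0 <= l j) -> rhs s0 tau eta lambda I0 l k = 0 ->
  l k = 0 -> l (k - 1)%Z = 0 /\ l (k + 1)%Z = 0 /\ I0 k = 0.
Proof.
  intros Hl HI Hp Hr Hk. unfold rhs, dlap in Hr. rewrite Hk, f_zero in Hr.
  generalize (HI k) (Hp (k-1)%Z) (Hp (k+1)%Z); intros.
  assert (0 <= lambda * l (k - 1)%Z) by (apply Rmult_le_pos; lra).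
  assert (0 <= lambda * l (k + 1)%Z) by (apply Rmult_le_pos; lra).
  assert (lambda * l (k - 1)%Z = 0) by nra. assert (lambda * l (k + 1)%Z = 0) by nra.
  split; [|split]; try nra.
Qed.

Lemma stat_pos s0 tau eta lambda I0 (l : Z -> R) :
  0 < lambda -> (forall j, 0 <= I0 j) -> (exists j, 0 < I0 j) -> (forall j, 0 <= l j) ->
  (forall j, rhs s0 tau eta lambda I0 l j = 0) -> forall j, 0 < l j.
Proof.
  intros Hl HI [j0 Hj0] Hp Hr j.
  destruct (Rlt_dec 0 (l j)) as [h|h]; auto. exfalso.
  assert (Hz : l j = 0) by (generalize (Hp j); lra).
  assert (Hall : forall n : nat, l (j + Z.of_nat n)%Z = 0 /\ l (j - Z.of_nat n)%Z = 0).
  { induction n as [|n [IH1 IH2]].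
    - simpl. rewrite Z.add_0_r, Z.sub_0_r. auto.
    - rewrite Nat2Z.inj_succ. split.
      + replace (j + Z.succ (Z.of_nat n))%Z with ((j + Z.of_nat n) + 1)%Z by lia.
        apply (zero_nb s0 tau eta lambda I0 l); auto.
      + replace (j - Z.succ (Z.of_nat n))%Z with ((j - Z.of_nat n) - 1)%Z by lia.
        apply (zero_nb s0 tau eta lambda I0 l); auto. }
  assert (l j0 = 0).
  { destruct (Z_le_dec j j0).
    - replace j0 with (j + Z.of_nat (Z.to_nat (j0 - j)))%Z by lia. apply Hall.
    - replace j0 with (j - Z.of_nat (Z.to_nat (j - j0)))%Z by lia. apply Hall. }
  destruct (zero_nb s0 tau eta lambda I0 l j0 Hl HI Hp (Hr j0) H) as [_ [_ H']]. lra.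
Qed.

Lemma shift_der (g : R -> R) h t l : derivable_pt_lim g (t + h) l -> derivable_pt_lim (fun s => g (s + h)) t l.
Proof.
  intros H eps He. destruct (H eps He) as [d Hd]. exists d. intros h' Hh' Hlt.
  replace (t + h' + h) with (t + h + h') by ring. apply Hd; auto.
Qed.

Lemma fin_T (P : R -> Z -> Prop) :
  (forall j, exists T, forall t, T <= t -> P t j) ->
  forall N : Z, exists T, forall t j, T <= t -> (Z.abs j <= N)%Z -> P t j.
Proof.
  intros H N.
  assert (A : forall n : nat, exists T, forall t j, T <= t -> (Z.abs j <= Z.of_nat n)%Z -> P t j).
  { induction n as [|n [T IH]].
    - destruct (H 0%Z) as [T HT]. exists T. intros t j Ht Hj. assert (j = 0%Z) by lia. subst; auto.
    - destruct (H (Z.of_nat (S n))) as [T1 H1]. destruct (H (- Z.of_nat (S n))%Z) as [T2 H2].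
      exists (Rmax T (Rmax T1 T2)). intros t j Ht Hj.
      generalize (Rmax_l T (Rmax T1 T2)) (Rmax_r T (Rmax T1 T2)) (Rmax_l T1 T2) (Rmax_r T1 T2); intros.
      destruct (Z_le_dec (Z.abs j) (Z.of_nat n)).
      + apply IH; auto; lra.
      + assert (j = Z.of_nat (S n) \/ j = (- Z.of_nat (S n))%Z) as [->| ->] by lia.
        apply H1; lra. apply H2; lra. }
  destruct (A (Z.to_nat N)) as [T HT]. exists T. intros t j Ht Hj. apply HT; auto. lia.
Qed.


Theorem theorem2 (s0 tau eta lambda : R) (I0 Iinf u0 : Z -> R)
    (I : R -> Z -> R) :
  0 < s0 < 1 -> 0 < tau -> 0 < eta -> 0 < lambda ->
  finitely_supported I0 ->
  (forall j, 0 <= I0 j < 1) ->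
  (exists j, 0 < I0 j) ->
  pos_bdd_stationary s0 tau eta lambda I0 Iinf ->
  (forall v, pos_bdd_stationary s0 tau eta lambda I0 v -> v = Iinf) ->
  (forall j, 0 <= u0 j) -> bounded_seq u0 -> finitely_supported u0 ->
  is_solution s0 tau eta lambda I0 u0 I ->
  forall N : Z, forall eps, 0 < eps ->
    exists T, forall t j, T <= t -> (Z.abs j <= N)%Z ->
      Rabs (I t j - Iinf j) < eps.
Proof.
  intros [Hs0 Hs1] Ht He Hl _ HI0 Hex _ Huniq Hu0pos [Mb HMb] _ [Isol0 [Irc [Ider Ibd]]] N eps Heps.
  set (M := Rabs Mb + (s0 + 1) / eta).
  assert (Hq : 0 < (s0 + 1) / eta) by (apply Rdiv_lt_0_compat; lra).
  assert (HM0 : 0 <= M) by (unfold M; generalize (Rabs_pos Mb); lra).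
  assert (HM2 : s0 + 1 <= eta * M).
  { unfold M. rewrite Rmult_plus_distr_l. replace (eta * ((s0 + 1) / eta)) with (s0 + 1) by (field; lra).
    generalize (Rmult_le_pos eta (Rabs Mb) ltac:(lra) (Rabs_pos Mb)). lra. }
  assert (HI01 : forall j, 0 <= I0 j <= 1) by (intros j; specialize (HI0 j); lra).
  assert (HI0p : forall j, 0 <= I0 j) by (intros j; apply HI01).
  assert (Hu0M : forall j, 0 <= u0 j <= M).
  { intros j. split; auto. generalize (HMb j) (Rle_abs (u0 j)) (Rle_abs Mb). unfold M. lra. }
  destruct (exist_sol s0 tau eta lambda I0 M (fun _ => 0)) as [U [U0 [[BU [HBU Ulip]] [Ub Uder]]]]; auto.
  intros; lra.
  destruct (exist_sol s0 tau eta lambda I0 M (fun _ => M)) as [V [V0 [[BV [HBV Vlip]] [Vb Vder]]]]; auto.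
  intros; lra.
  assert (Urc : forall j, rc0 (fun t => U t j)) by (intros j; unfold rc0; apply (lip_rc0 (fun t => U t j) BU); auto).
  assert (Vrc : forall j, rc0 (fun t => V t j)) by (intros j; unfold rc0; apply (lip_rc0 (fun t => V t j) BV); auto).
  assert (Irc' : forall j, rc0 (fun t => I t j)).
  { intros j e He'. destruct (Irc j e He') as [d [Hd Hd']]. exists d; split; auto. rewrite Isol0. auto. }
  assert (Uabs : forall t j, 0 <= t -> Rabs (U t j) <= M) by (intros t j H; apply Rabs_le; specialize (Ub t j H); lra).
  assert (Vabs : forall t j, 0 <= t -> Rabs (V t j) <= M) by (intros t j H; apply Rabs_le; specialize (Vb t j H); lra).
  assert (Umono : forall j t s, 0 <= t <= s -> U t j <= U s j).
  { intros j t s Hts. destruct (Req_dec t s) as [->|Hne]; [lra|].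
    set (h := s - t). assert (Hh : 0 < h) by (unfold h; lra).
    replace s with (t + h) by (unfold h; ring).
    apply (cmp_sol s0 tau eta lambda I0 U (fun t => U (t + h)) t M); auto; try lra.
    - intros k t' Ht'. apply (shift_der (fun s => U s k)). apply Uder. lra.
    - intros k. unfold rc0. apply (lip_rc0 (fun t => U (t + h) k) BU); auto. intros a b.
      replace (a - b) with ((a + h) - (b + h)) by ring. apply Ulip.
    - intros t' k Ht'. split; apply Uabs; lra.
    - intros k. rewrite U0. apply Ub. lra. }
  assert (Vanti : forall j t s, 0 <= t <= s -> V s j <= V t j).
  { intros j t s Hts. destruct (Req_dec t s) as [->|Hne]; [lra|].
    set (h := s - t). assert (Hh : 0 < h) by (unfold h; lra).
    replace s with (t + h) by (unfold h; ring).
    apply (cmp_sol s0 tau eta lambda I0 (fun t => V (t + h)) V t M); auto; try lra.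
    - intros k t' Ht'. apply (shift_der (fun s => V s k)). apply Vder. lra.
    - intros k. unfold rc0. apply (lip_rc0 (fun t => V (t + h) k) BV); auto. intros a b.
      replace (a - b) with ((a + h) - (b + h)) by ring. apply Vlip.
    - intros t' k Ht'. split; apply Vabs; lra.
    - intros k. rewrite V0. apply Vb. lra. }
  assert (Hsand : forall t j, 0 <= t -> U t j <= I t j <= V t j).
  { intros t j Ht0. destruct (Ibd t Ht0) as [MI HMI].
    split.
    - apply (cmp_sol s0 tau eta lambda I0 U I t (Rmax M MI)); auto; try lra.
      intros t' k Ht'. split. eapply Rle_trans. apply Uabs; lra. apply Rmax_l.
      eapply Rle_trans. apply HMI; lra. apply Rmax_r.
      intros k. rewrite U0, Isol0. auto.
    - apply (cmp_sol s0 tau eta lambda I0 I V t (Rmax M MI)); auto; try lra.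
      intros t' k Ht'. split. eapply Rle_trans. apply HMI; lra. apply Rmax_r.
      eapply Rle_trans. apply Vabs; lra. apply Rmax_l.
      intros k. rewrite V0, Isol0. apply Hu0M. }
  set (Ul := fun j => proj1_sig (mono_lim_sig (fun t => U t j) M (Umono j) (fun t Ht => proj2 (Ub t j Ht)))).
  assert (UC : forall j e, 0 < e -> exists T, 0 <= T /\ forall t, T <= t -> Rabs (U t j - Ul j) < e).
  { intros j. exact (proj2_sig (mono_lim_sig (fun t => U t j) M (Umono j) (fun t Ht => proj2 (Ub t j Ht)))). }
  assert (Vm : forall j t s, 0 <= t <= s -> - V t j <= - V s j) by (intros j t s H; specialize (Vanti j t s H); lra).
  assert (Vbd : forall j t, 0 <= t -> - V t j <= 0) by (intros j t H; specialize (Vb t j H); lra).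
  set (Vl := fun j => - proj1_sig (mono_lim_sig (fun t => - V t j) 0 (Vm j) (Vbd j))).
  assert (VC : forall j e, 0 < e -> exists T, 0 <= T /\ forall t, T <= t -> Rabs (V t j - Vl j) < e).
  { intros j e He'. destruct (proj2_sig (mono_lim_sig (fun t => - V t j) 0 (Vm j) (Vbd j)) e He') as [T [HT HT']].
    exists T; split; auto. intros t Htt. specialize (HT' t Htt). unfold Vl.
    replace (V t j - - proj1_sig (mono_lim_sig (fun t0 : R => - V t0 j) 0 (Vm j) (Vbd j))) with
      (- (- V t j - proj1_sig (mono_lim_sig (fun t0 : R => - V t0 j) 0 (Vm j) (Vbd j)))) by ring.
    rewrite Rabs_Ropp. auto. }
  assert (UlB : forall j, 0 <= Ul j <= M).
  { intros j. apply (lim_bounds (fun t => U t j)); auto. }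
  assert (VlB : forall j, 0 <= Vl j <= M).
  { intros j. apply (lim_bounds (fun t => V t j)); auto. }
  assert (Ustat : forall j, rhs s0 tau eta lambda I0 Ul j = 0).
  { apply (stat_lim s0 tau eta lambda I0 U Ul BU); auto; try lra.
    intros t j Ht0; apply Ub; auto. intros j; apply UlB. }
  assert (Vstat : forall j, rhs s0 tau eta lambda I0 Vl j = 0).
  { apply (stat_lim s0 tau eta lambda I0 V Vl BV); auto; try lra.
    intros t j Ht0; apply Vb; auto. intros j; apply VlB. }
  assert (EU : Ul = Iinf).
  { apply Huniq. split; [|split]; auto.
    apply (stat_pos s0 tau eta lambda I0); auto. intros j; apply UlB.
    exists M. intros j. apply Rabs_le. specialize (UlB j). lra. }
  assert (EV : Vl = Iinf).
  { apply Huniq. split; [|split]; auto.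
    apply (stat_pos s0 tau eta lambda I0); auto. intros j; apply VlB.
    exists M. intros j. apply Rabs_le. specialize (VlB j). lra. }
  apply (fin_T (fun t j => Rabs (I t j - Iinf j) < eps)).
  intros j. destruct (UC j eps Heps) as [T1 [HT1 HT1']]. destruct (VC j eps Heps) as [T2 [HT2 HT2']].
  exists (Rmax T1 T2). intros t Htt.
  generalize (Rmax_l T1 T2) (Rmax_r T1 T2); intros.
  specialize (HT1' t ltac:(lra)). specialize (HT2' t ltac:(lra)).
  rewrite EU in HT1'. rewrite EV in HT2'.
  destruct (Hsand t j ltac:(lra)).
  apply Rabs_def2 in HT1'. apply Rabs_def2 in HT2'. apply Rabs_def1; lra.
Qed.
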